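(* Let $(\Gamma,\Lambda)$ be a Hecke pair with $\Lambda$ isomorphic to $\mathbb{Z}^n$. Then $\mathbb{R}^n$ is an engulfing group of $(\Gamma,\Lambda)$.
   Context: A Hecke pair $(\Gamma,\Lambda)$ is a group $\Gamma$ with a commensurated subgroup $\Lambda$ (commensurable, i.e. finite index intersection, with all its conjugates). A locally compact group $E$ is an engulfing group of $(\Gamma,\Lambda)$ if there are a homomorphism $\rho:\Lambda\to E$ with finite kernel and discrete cocompact image, and a homomorphism $\Delta:\Gamma\to\mathrm{Aut}(E)$ extending $h\mapsto$ conjugation by $\rho(h)$ on $\Lambda$, such that for every $g\in\Gamma$, $\Delta(g)(\rho(h))=\rho(ghg^{-1})$ for all $h$ in some finite index subgroup of $\Lambda$. *)

(* Defs.v *)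
From HB Require Import structures.
From mathcomp Require Import all_boot all_order all_algebra.
From mathcomp Require Import all_classical all_reals all_analysis.

Set Implicit Arguments.
Unset Strict Implicit.
Unset Printing Implicit Defensive.

Import Order.TTheory GRing.Theory Num.Theory.
Import numFieldNormedType.Exports.
Local Open Scope classical_set_scope.

Section GroupNotions.
Variable G : groupType.
Local Open Scope group_scope.

Definition is_subgroup (H : set G) : Prop :=
  [/\ H 1, (forall x y, H x -> H y -> H (x * y)) & (forall x, H x -> H x^-1)].

Definition finite_index (K H : set G) : Prop :=
  exists s : seq G, forall k, K k -> exists2 t, t \in s & H (t^-1 * k).

Definition conj_set (g : G) (H : set G) : set G :=
  [set g * h * g^-1 | h in H].

Definition hecke_pair (L : set G) : Prop :=
  is_subgroup L /\
  forall g : G, finite_index L (L `&` conj_set g L) /\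
                finite_index (conj_set g L) (L `&` conj_set g L).

End GroupNotions.

Definition isomorphic_to_Zn (G : groupType) (L : set G) (n : nat) : Prop :=
  exists phi : G -> 'rV[int]_n,
    [/\ (forall x y, L x -> L y -> phi (x * y)%g = phi x + phi y)%R,
        (forall x y, L x -> L y -> phi x = phi y -> x = y) &
        (forall v, exists2 h, L h & phi h = v)].

Definition is_top_aut (R : realType) (n : nat) (f : 'rV[R]_n -> 'rV[R]_n) : Prop :=
  (forall x y, f (x + y)%R = (f x + f y)%R) /\
  exists g : 'rV[R]_n -> 'rV[R]_n,
    [/\ cancel f g, cancel g f, continuous (f : 'rV[R]_n -> 'rV[R]_n) & continuous (g : 'rV[R]_n -> 'rV[R]_n)].

Definition engulfing_Rn (R : realType) (n : nat) (G : groupType) (L : set G) : Prop :=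
  exists (rho : G -> 'rV[R]_n) (Delta : G -> ('rV[R]_n -> 'rV[R]_n)),
    (
     (forall x y, L x -> L y -> rho (x * y)%g = (rho x + rho y)%R) /\
     finite_set [set h | L h /\ rho h = 0%R] /\
     (* discrete image *)
     (forall x, (rho @` L) x ->
        exists2 U, nbhs x U & forall y, (rho @` L) y -> U y -> y = x) /\
     (* cocompact image *)
     (exists2 K : set 'rV[R]_n, compact K &
        forall v, exists k h, [/\ K k, L h & v = (k + rho h)%R]) /\
     (forall g, is_top_aut (Delta g)) /\
     (forall g1 g2, Delta (g1 * g2)%g = Delta g1 \o Delta g2) /\
     (* extending conjugation by rho(h) on Λ *)
     (forall h, L h -> Delta h = (fun x => rho h + x - rho h)%R) /\
     (forall g : G, exists L' : set G,
        [/\ is_subgroup L', L' `<=` L, finite_index L L' &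
            forall h, L' h -> L (g * h * g^-1)%g /\
                              Delta g (rho h) = rho (g * h * g^-1)%g])).

(* Main.v *)
Require Import Defs.
From HB Require Import structures.
From mathcomp Require Import all_boot all_order all_algebra.
From mathcomp Require Import all_classical all_reals all_analysis.
From mathcomp Require Import zify lra.

Section Aux.
Set Implicit Arguments.
Unset Strict Implicit.
Unset Printing Implicit Defensive.
Import Order.TTheory GRing.Theory Num.Theory.
Import numFieldNormedType.Exports.
Local Open Scope classical_set_scope.
Local Open Scope ring_scope.

Lemma mulmxr_continuous (R : realType) n (A : 'M[R]_n) :
  continuous (fun x : 'rV[R]_n => x *m A).
Proof.
move=> x.
have hD : forall (f g : 'rV[R]_n -> 'rV[R]_n), {for x, continuous f} -> {for x, continuous g} ->
   {for x, continuous (fun y => f y + g y)}.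
  by move=> f g hf hg; exact: (continuousD hf hg).
have -> : (fun x : 'rV[R]_n => x *m A) =
  (fun y => \sum_(k <- index_enum 'I_n) y 0 k *: row k A).
  by apply/funext => y; rewrite mulmx_sum_row.
elim: (index_enum _) => [|k r IH].
  under eq_fun do rewrite big_nil. exact: cst_continuous.
under eq_fun do rewrite big_cons.
have h1 : {for x, continuous (fun y : 'rV[R]_n => y 0 k *: row k A)}.
  by apply: continuousZr_tmp; exact: coord_continuous.
exact: (hD _ _ h1 IH).
Qed.

Section Zn.
Variable n : nat.
Variable M : set 'rV[int]_n.
Hypothesis M0 : M 0.
Hypothesis MB : forall u v, M u -> M v -> M (u - v).

Lemma MN u : M u -> M (- u).
Proof. by move=> Mu; rewrite -sub0r; apply: MB. Qed.
Lemma MD u v : M u -> M v -> M (u + v).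
Proof. by move=> Mu Mv; rewrite -[v]opprK; apply: MB => //; apply: MN. Qed.
Lemma Mn u k : M u -> M (u *+ k).
Proof. by move=> Mu; elim: k => [|k IH]; rewrite ?mulr0n // mulrS; apply: MD. Qed.

Lemma mult_in_subgroup (S : seq 'rV[int]_n) :
  (forall v, exists2 u, u \in S & M (v - u)) ->
  exists2 m : nat, (0 < m)%N & forall v, M (v *+ m).
Proof.
move=> HS; exists (size S)`!; first exact: fact_gt0.
move=> v.
pose P j := fun u => `[< M (v *+ j - u) >].
pose f j := find (P j) S.
have hasP j : has (P j) S.
  have [u uS Mu] := HS (v *+ j); apply/hasP; exists u => //; exact/asboolP.
have fP j : M (v *+ j - nth 0 S (f j)).
  exact/asboolP/(nth_find 0 (hasP j)).
have fS j : (f j < size S)%N by rewrite -has_find.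
have : ~~ uniq (map f (iota 0 (size S).+1)).
  apply/negP => U.
  have := uniq_leq_size U (s2 := iota 0 (size S)).
  rewrite size_map !size_iota ltnn => H; suff: false by [].
  apply: H => x /mapP [j _ ->].
  by rewrite mem_iota add0n fS.
move=> /(uniqPn 0) [i [j [ij jS]]].
rewrite size_map size_iota in jS.
rewrite !(nth_map 0) ?size_iota ?(ltn_trans ij) // !nth_iota ?(ltn_trans ij) // !add0n => fij.
have Md : M (v *+ (j - i)).
  rewrite (mulrnBr v (ltnW ij)).
  have := MB (fP j) (fP i); rewrite fij.
  by rewrite opprB addrA subrK.
have d0 : (0 < j - i)%N by rewrite subn_gt0.
have dS : (j - i <= size S)%N by apply: leq_trans (leq_subr _ _) _; rewrite -ltnS.
have /dvdnP [q ->] : ((j - i) %| (size S)`!)%N by apply: dvdn_fact; rewrite d0.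
by rewrite mulnC mulrnA; apply: Mn.
Qed.
End Zn.

Lemma additive_rowmx n p (f : 'rV[int]_n -> 'rV[int]_p) :
  (forall u v, f (u - v) = f u - f v) ->
  forall v, f v = v *m \matrix_(i < n) f (delta_mx 0 i).
Proof.
move=> fB v.
pose fA := GRing.isZmodMorphism.Build _ _ f fB.
pose F : {additive 'rV[int]_n -> 'rV[int]_p} := HB.pack f fA.
rewrite mulmx_sum_row {1}(row_sum_delta v).
have -> : f (\sum_(j < n) v 0 j *: delta_mx 0 j) = F (\sum_(j < n) v 0 j *: delta_mx 0 j) by [].
rewrite raddf_sum; apply: eq_bigr => j _.
by rewrite rowK -[v 0 j]intz !scaler_int raddfMz.
Qed.

Lemma rV_natmul_inj (R : realType) n (x y : 'rV[R]_n) k :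
  (0 < k)%N -> x *+ k = y *+ k -> x = y.
Proof.
move=> k0 e; apply/rowP => j; move/rowP/(_ j): e.
by rewrite !mulmxnE => /eqP; rewrite eqr_pMn2r // => /eqP.
Qed.

Lemma mx_uniq (R : realType) n p (A B : 'M[R]_(n, p)) :
  (forall i : 'I_n, exists2 k : nat, (0 < k)%N &
     map_mx intr (delta_mx 0 i *+ k : 'rV[int]_n) *m A =
     map_mx intr (delta_mx 0 i *+ k : 'rV[int]_n) *m B) -> A = B.
Proof.
move=> H; apply/row_matrixP => i.
have [k k0 e] := H i.
have E : map_mx intr (delta_mx 0 i *+ k : 'rV[int]_n) = (delta_mx 0 i : 'rV[R]_n) *+ k.
  apply/rowP => j; rewrite !mxE mulmxnE !mxE.
  by rewrite rmorphMn rmorph_nat mulmxnE mxE.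
have mk : forall C : 'M[R]_(n, p), ((delta_mx 0 i : 'rV[R]_n) *+ k) *m C = ((delta_mx 0 i : 'rV[R]_n) *m C) *+ k.
  by move=> C; exact: (raddfMn (mulmxr C)).
rewrite E !mk in e.
rewrite !rowE; exact: (rV_natmul_inj k0 e).
Qed.

Lemma int_small (R : realType) (z : int) : `|(z%:~R : R)| < 1 -> z = 0.
Proof. move=> h. have : (`|z|%:~R : R) < (1%:~R : R) by rewrite intr_norm. rewrite ltr_int. lia. Qed.

Lemma entry_le_norm (R : realType) n (x : 'rV[R]_n) j : `|x 0 j| <= `|x|.
Proof. rewrite [leRHS]/Num.Def.normr /= mx_normrE; apply/bigmax_geP; right => /=; exists (0, j) => //. Qed.

Section Main.
Variables (G : groupType) (L : set G) (n : nat) (R : realType).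
Hypothesis HL : hecke_pair L.
Variable phi : G -> 'rV[int]_n.
Hypothesis phiM : forall x y, L x -> L y -> phi (x * y)%g = phi x + phi y.
Hypothesis phi_inj : forall x y, L x -> L y -> phi x = phi y -> x = y.
Hypothesis phi_surj : forall v, exists2 h, L h & phi h = v.

Let L1 : L 1%g. Proof. by case: HL => [[]]. Qed.
Let LM x y : L x -> L y -> L (x * y)%g. Proof. by case: HL => [[_ H _]] _; apply: H. Qed.
Let LV x : L x -> L x^-1%g. Proof. by case: HL => [[_ _ H]] _; apply: H. Qed.
Let HL2 g : finite_index L (L `&` conj_set g L) /\ finite_index (conj_set g L) (L `&` conj_set g L).
Proof. by case: HL => _; apply. Qed.

Definition psi v : G := s2val (cid2 (phi_surj v)).
Lemma psiL v : L (psi v). Proof. exact: (s2valP (cid2 (phi_surj v))). Qed.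
Lemma phipsi v : phi (psi v) = v. Proof. exact: (s2valP' (cid2 (phi_surj v))). Qed.
Lemma psiphi h : L h -> psi (phi h) = h.
Proof. by move=> Lh; apply: phi_inj => //; [exact: psiL | rewrite phipsi]. Qed.

Lemma phi1 : phi 1%g = 0.
Proof.
have e := phiM L1 L1; rewrite mulg1 in e.
have : phi 1%g - phi 1%g = phi 1%g + phi 1%g - phi 1%g by rewrite -e.
by rewrite subrr addrK => /esym.
Qed.

Lemma phiV h : L h -> phi h^-1%g = - phi h.
Proof.
move=> Lh; have := phiM Lh (LV Lh); rewrite mulgV phi1 => /esym/eqP.
by rewrite addrC addr_eq0 => /eqP.
Qed.

Definition cj (g h : G) : G := (g * h * g^-1)%g.
Lemma cjM g a b : cj g (a * b)%g = (cj g a * cj g b)%g.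
Proof. by rewrite /cj !mulgA mulgVK. Qed.
Lemma cjV g a : cj g a^-1%g = (cj g a)^-1%g.
Proof. by rewrite /cj !invgM invgK mulgA. Qed.
Lemma cj1 g : cj g 1%g = 1%g.
Proof. by rewrite /cj mulg1 mulgV. Qed.
Lemma cjM2 g1 g2 a : cj (g1 * g2)%g a = cj g1 (cj g2 a).
Proof. by rewrite /cj invgM !mulgA. Qed.
Lemma cj_inv g h : cj g (g^-1 * h * g^-1^-1)%g = h.
Proof. by rewrite /cj invgK !mulgA mulgV mul1g mulgK. Qed.

Definition Mg g v := L (cj g (psi v)).
Definition cg g v := phi (cj g (psi v)).

Lemma psiB u v : psi (u - v) = (psi u * (psi v)^-1)%g.
Proof.
apply: phi_inj; first exact: psiL.
  by apply: LM; [exact: psiL | apply: LV; exact: psiL].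
by rewrite phipsi phiM ?phiV ?phipsi //; [exact: psiL | exact: psiL | apply: LV; exact: psiL].
Qed.

Lemma psi0 : psi 0 = 1%g.
Proof. by rewrite -phi1 psiphi. Qed.

Lemma Mg0 g : Mg g 0.
Proof. by rewrite /Mg psi0 cj1. Qed.

Lemma MgB g u v : Mg g u -> Mg g v -> Mg g (u - v).
Proof. by rewrite /Mg psiB cjM cjV => Mu Mv; apply: LM => //; apply: LV. Qed.

Lemma cgB g u v : Mg g u -> Mg g v -> cg g (u - v) = cg g u - cg g v.
Proof.
rewrite /Mg /cg psiB cjM cjV => Mu Mv.
by rewrite phiM ?phiV //; apply: LV.
Qed.

Lemma cg0 g : cg g 0 = 0.
Proof. by rewrite /cg psi0 cj1 phi1. Qed.

Lemma cgD g u v : Mg g u -> Mg g v -> cg g (u + v) = cg g u + cg g v.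
Proof.
move=> Mu Mv.
have Mnv : Mg g (- v) by rewrite -sub0r; apply: MgB => //; exact: Mg0.
have cnv : cg g (- v) = - cg g v by rewrite -sub0r cgB ?cg0 ?sub0r //; exact: Mg0.
have -> : u + v = u - (- v) by rewrite opprK.
by rewrite cgB // cnv opprK.
Qed.

Lemma Mgn g v k : Mg g v -> Mg g (v *+ k).
Proof. by move=> Mv; apply: (Mn (Mg0 g) (@MgB g)). Qed.

Lemma cgn g v k : Mg g v -> cg g (v *+ k) = cg g v *+ k.
Proof.
move=> Mv; elim: k => [|k IH]; first by rewrite !mulr0n cg0.
by rewrite !mulrS cgD ?IH //; apply: Mgn.
Qed.

Lemma fin_ind g : exists S : seq 'rV[int]_n, forall v, exists2 u, u \in S & Mg g (v - u).
Proof.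
have [[s fi] _] := HL2 g^-1%g.
exists (map phi s) => v.
have [t ts [Ltk [h Lh eh]]] := fi (psi v) (psiL v).
have Lt : L t.
  have -> : t = (psi v * (t^-1 * psi v)^-1)%g by rewrite invgM invgK mulgA mulgV mul1g.
  by apply: LM => //; [exact: psiL | apply: LV].
exists (phi t); first exact: map_f.
rewrite /Mg.
have -> : psi (v - phi t) = (t^-1 * psi v)%g.
  apply: phi_inj => //; first exact: psiL.
  rewrite phipsi phiM; [|by apply: LV|exact: psiL].
  by rewrite phiV // phipsi addrC.
by rewrite -eh cj_inv.
Qed.

Lemma mg g : exists2 m : nat, (0 < m)%N & forall v, Mg g (v *+ m).
Proof.
have [S HS] := fin_ind g.
exact: (mult_in_subgroup (Mg0 g) (@MgB g) HS).
Qed.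

Definition Spec g (A : 'M[R]_n) := exists2 m : nat, (0 < m)%N &
  (forall v, Mg g (v *+ m)) /\
  (forall v, Mg g v -> map_mx intr v *m A = map_mx intr (cg g v)).

Lemma spec_ex g : exists A, Spec g A.
Proof.
have [m m0 Mm] := mg g.
pose f v := cg g (v *+ m).
have fB u v : f (u - v) = f u - f v by rewrite /f mulrnBl cgB.
pose B := \matrix_(i < n) f (delta_mx 0 i).
exists ((m%:R : R)^-1 *: map_mx intr B); exists m => //; split => // v Mv.
have e : cg g v *+ m = v *m B by rewrite -cgn // -(additive_rowmx fB v).
rewrite -scalemxAr -map_mxM -e.
apply/rowP => j; rewrite !mxE mulmxnE rmorphMn.
rewrite -(mulr_natl ((cg g v 0 j)%:~R : R) m) mulrA mulVf ?mul1r //.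
by rewrite pnatr_eq0 -lt0n.
Qed.

Definition Ag g : 'M[R]_n := projT1 (cid (spec_ex g)).
Lemma AgP g : Spec g (Ag g). Proof. exact: (projT2 (cid (spec_ex g))). Qed.

Lemma spec_uniq g A1 A2 : Spec g A1 -> Spec g A2 -> A1 = A2.
Proof.
move=> [m1 m10 [M1 H1]] [m2 m20 [M2 H2]].
apply: mx_uniq => i; exists m1 => //.
by rewrite H1 ?H2.
Qed.

Lemma AgL h : L h -> Ag h = 1%:M.
Proof.
move=> Lh; apply: (spec_uniq (AgP h)); exists 1%N => //; split.
  move=> v; rewrite mulr1n /Mg /cj.
  by apply: LM; [apply: LM => //; exact: psiL | exact: LV].
move=> v _; rewrite mulmx1 /cg /cj.
have Lp := psiL v.
rewrite phiM; [|by apply: LM|by apply: LV].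
by rewrite phiM // phiV // phipsi addrC addKr.
Qed.

Lemma AgM g1 g2 : Ag (g1 * g2)%g = Ag g2 *m Ag g1.
Proof.
have [m1 m10 [M1 H1]] := AgP g1.
have [m2 m20 [M2 H2]] := AgP g2.
have [m12 m120 [M12 H12]] := AgP (g1 * g2)%g.
apply: mx_uniq => i.
pose d : 'rV[int]_n := delta_mx 0 i.
exists (m2 * m12 * m1)%N; first by rewrite !muln_gt0 m10 m20 m120.
have Mu : Mg g2 (d *+ (m2 * m12)) by rewrite mulrnA; apply: Mgn.
have Mv2 : Mg g2 (d *+ (m2 * m12 * m1)) by rewrite mulrnA; apply: Mgn.
have Mv12 : Mg (g1 * g2)%g (d *+ (m2 * m12 * m1)).
  by rewrite mulnAC mulnC mulrnA; apply: Mgn.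
have Mc : Mg g1 (cg g2 (d *+ (m2 * m12 * m1))).
  by rewrite (mulrnA d (m2 * m12) m1) cgn.
have cc : cg (g1 * g2)%g (d *+ (m2 * m12 * m1)) = cg g1 (cg g2 (d *+ (m2 * m12 * m1))).
  by rewrite /cg cjM2 psiphi.
by rewrite H12 // cc -H1 // -H2 // mulmxA.
Qed.


Lemma engulf : engulfing_Rn R n L.
Proof.
pose rho h : 'rV[R]_n := map_mx intr (phi h).
pose Delta g (x : 'rV[R]_n) := x *m Ag g.
have A1 : Ag 1%g = 1%:M by apply: AgL.
exists rho, Delta; split.
  by move=> x y Lx Ly; rewrite /rho phiM // map_mxD.
split.
  apply: (@sub_finite_set _ _ [set 1%g]); last exact: finite_set1.
  move=> h [Lh rh0]; apply: phi_inj => //; rewrite phi1.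
  apply/rowP => j; move/rowP/(_ j): rh0; rewrite !mxE => /eqP.
  by rewrite intr_eq0 => /eqP.
split.
  move=> _ [h0 Lh0 <-]; exists (ball (rho h0) 1); first exact: nbhsx_ballx.
  move=> _ [h1 Lh1 <-]; rewrite -ball_normE /ball_ /= => hb.
  apply/rowP => j.
  have := le_lt_trans (entry_le_norm (rho h0 - rho h1) j) hb.
  rewrite !mxE -rmorphB /= => /int_small /eqP; rewrite subr_eq0 => /eqP e.
  by rewrite e.
split.
  exists [set v : 'rV[R]_n | forall i, `[(0:R), 1]%classic (v ord0 i)].
    by apply: (@rV_compact _ _ (fun=> `[(0:R), 1]%classic)) => _; exact: segment_compact.
  move=> v.
  pose w : 'rV[int]_n := \row_i Num.floor (v 0 i).
  exists (v - rho (psi w)), (psi w); split; last by rewrite subrK.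
  - move=> i; rewrite /= in_itv /= /rho phipsi !mxE.
    have h1 := floor_le (v 0 i).
    have h2 := floorD1_gt (v 0 i).
    rewrite intrD in h2.
    apply/andP; split; lra.
  - exact: psiL.
split.
  move=> g; split; first by move=> x y; rewrite /Delta mulmxDl.
  exists (Delta g^-1%g); split.
  - by move=> x; rewrite /Delta -mulmxA -AgM mulVg A1 mulmx1.
  - by move=> x; rewrite /Delta -mulmxA -AgM mulgV A1 mulmx1.
  - exact: mulmxr_continuous.
  - exact: mulmxr_continuous.
split.
  by move=> g1 g2; apply/funext => x; rewrite /Delta /= AgM mulmxA.
split.
  by move=> h Lh; apply/funext => x; rewrite /Delta AgL // mulmx1 addrC addKr.
move=> g; exists [set h | L h /\ L (g * h * g^-1)%g]; split.
- split.
  + by split=> //; rewrite -/(cj g 1%g) cj1.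
  + move=> x y [Lx Lgx] [Ly Lgy]; split; first exact: LM.
    by rewrite -/(cj g (x * y)%g) cjM; apply: LM.
  + move=> x [Lx Lgx]; split; first exact: LV.
    by rewrite -/(cj g x^-1%g) cjV; apply: LV.
- by move=> h [].
- have [[s fi] _] := HL2 g^-1%g.
  exists s => k Lk; have [t ts [Ltk [h Lh eh]]] := fi k Lk.
  exists t => //; split => //.
  by rewrite -/(cj g (t^-1 * k)%g) -eh cj_inv.
- move=> h [Lh Lgh]; split => //.
  have [m m0 [Mm H]] := AgP g.
  rewrite /Delta /rho H; last by rewrite /Mg psiphi.
  by rewrite /cg psiphi.
Qed.

End Main.
End Aux.

Theorem proposition3p6 (G : groupType) (L : set G) (n : nat) (R : realType) :
  hecke_pair L -> isomorphic_to_Zn L n -> engulfing_Rn R n L.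
Proof.
move=> HL [phi [phiM phi_inj phi_surj]].
exact: (engulf R HL phiM phi_inj phi_surj).
Qed.
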